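(* In the setting below, suppose that the function $x\mapsto f(x)+g(Ax)$ is bounded below on $\mathbb R^n$ (equivalently, $F(x)=f(x)+g(Ax)+\Phi_{+,\lambda}(Bx-b)$ is bounded below) and that $\{x:\ x\in\operatorname{ri}(\operatorname{dom}f),\ Ax\in\operatorname{ri}(\operatorname{dom}g),\ Bx\le b\}\neq\emptyset$, where ''$\operatorname{ri}$'' may be omitted for $f$ (resp. $g$) if $f$ (resp. $g$) is polyhedral. Then for every $\mu>0$ the problem $\inf_{w=[y;z]}\ \Xi(w)+\Psi_{+,\mu}(z)$ has a global minimizer.
   Context: Let $f:\mathbb R^n\to(-\infty,\infty]$ and $g:\mathbb R^m\to(-\infty,\infty]$ be proper, lsc and convex, with convex conjugates $f^*(q)=\sup_x\{\langle q,x\rangle-f(x)\}$, $g^*$. Let $A\in\mathbb R^{m\times n}$, $B\in\mathbb R^{r\times n}$, $b\in\mathbb R^r$, $\lambda,\mu\in\mathbb R^r$ with $\lambda,\mu>0$. $\Phi_{+,\lambda}(u)=\sum_i\lambda_i\mathbf 1_{\{u_i>0\}}$. For $w=[y;z]\in\mathbb R^m\times\mathbb R^r$, $\Xi(w):=f^*(-A^\top y-B^\top z)+g^*(y)+\langle b,z\rangle$. $\Psi_{+,\mu}(z)=\sum_{i=1}^r\mu_i\mathbf 1_{\{z_i\ne0\}}+\delta(z\mid\mathbb R^r_+)$. $\operatorname{ri}$ denotes relative interior. *)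

(* Defs.v *)
From HB Require Import structures.
From mathcomp Require Import all_boot all_order all_algebra.
From mathcomp Require Import all_classical all_reals all_analysis.
Set Implicit Arguments. Unset Strict Implicit. Unset Printing Implicit Defensive.
Import Order.TTheory GRing.Theory Num.Theory.
Import numFieldNormedType.Exports.
Local Open Scope classical_set_scope.
Local Open Scope ring_scope.

Section ConvexDefs.
Context {R : realType}.

Definition dotv {n : nat} (u v : 'cV[R]_n) : R := \sum_(i < n) u i 0 * v i 0.

Definition edom {n : nat} (f : 'cV[R]_n -> \bar R) : set 'cV[R]_n :=
  [set x | (f x < +oo)%E].

Definition proper_fun {n : nat} (f : 'cV[R]_n -> \bar R) : Prop :=
  (forall x, f x != -oo%E) /\ (exists x, (f x < +oo)%E).

Definition convex_efun {n : nat} (f : 'cV[R]_n -> \bar R) : Prop :=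
  forall (x y : 'cV[R]_n) (t : R), 0 < t < 1 ->
    (f ((1 - t) *: x + t *: y)%R <= (1 - t)%:E * f x + t%:E * f y)%E.

Definition plsc_convex {n : nat} (f : 'cV[R]_n -> \bar R) : Prop :=
  [/\ proper_fun f, lower_semicontinuous f & convex_efun f].

Definition conj_fun {n : nat} (f : 'cV[R]_n -> \bar R) (q : 'cV[R]_n) : \bar R :=
  ereal_sup [set ((dotv q x)%:E - f x)%E | x in [set: 'cV[R]_n]].

Definition aff_hull {n : nat} (C : set 'cV[R]_n) : set 'cV[R]_n :=
  [set y | exists (k : nat) (a : 'I_k -> R) (p : 'I_k -> 'cV[R]_n),
     [/\ forall i, C (p i), \sum_(i < k) a i = 1 & y = \sum_(i < k) a i *: p i]].

Definition rel_int {n : nat} (C : set 'cV[R]_n) : set 'cV[R]_n :=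
  [set x | C x /\ exists2 e : R, 0 < e &
     forall y, aff_hull C y -> dotv (y - x) (y - x) < e ^+ 2 -> C y].

(* polyhedral convex function: its epigraph {(x,t) | f x <= t} is a polyhedral
   set, i.e. the intersection of finitely many closed half-spaces of R^n x R *)
Definition polyhedral_fun {n : nat} (f : 'cV[R]_n -> \bar R) : Prop :=
  exists (k : nat) (Cm : 'M[R]_(k, n)) (e d : 'cV[R]_k),
    forall (x : 'cV[R]_n) (t : R),
      (f x <= t%:E)%E <-> (forall i, (Cm *m x) i 0 + e i 0 * t <= d i 0).

Definition ind_nonneg {r : nat} (z : 'cV[R]_r) : \bar R :=
  if `[< forall i, 0 <= z i 0 >] then 0%E else +oo%E.

Definition Psi_plus {r : nat} (mu : 'cV[R]_r) (z : 'cV[R]_r) : \bar R :=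
  ((\sum_(i < r) (if z i 0 != 0 then mu i 0 else 0))%:E + ind_nonneg z)%E.

Definition Xi {n m r : nat} (f : 'cV[R]_n -> \bar R) (g : 'cV[R]_m -> \bar R)
  (A : 'M[R]_(m, n)) (B : 'M[R]_(r, n)) (b : 'cV[R]_r)
  (y : 'cV[R]_m) (z : 'cV[R]_r) : \bar R :=
  (conj_fun f (- (A^T *m y) - B^T *m z)%R + conj_fun g y + (dotv b z)%:E)%E.

End ConvexDefs.

(* Main.v *)
Require Import Defs.
From HB Require Import structures.
From mathcomp Require Import all_boot all_order all_algebra.
From mathcomp Require Import all_classical all_reals all_analysis.
From mathcomp Require Import ring lra zify.
Import Order.TTheory GRing.Theory Num.Theory.
Local Open Scope classical_set_scope.
Local Open Scope ring_scope.
Set Implicit Arguments. Unset Strict Implicit. Unset Printing Implicit Defensive.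


Section Core.
Variable R : realType.
Variable V : Type.
Variable cmb : R -> V -> V -> V.

Definition affineC (c : V -> R) :=
  forall t x y, c (cmb t x y) = (1 - t) * c x + t * c y.
Definition convR (phi : V -> \bar R) := forall t x y a b, 0 < t < 1 ->
  phi x = a%:E -> phi y = b%:E -> (phi (cmb t x y) <= ((1-t)*a + t*b)%:E)%E.
Definition RIc (phi : V -> \bar R) w0 := forall w, (phi w < +oo)%E ->
  exists2 e : R, 0 < e & (phi (cmb (-e) w0 w) < +oo)%E.
Definition feas (E S : seq (V -> R)) w :=
  (forall c, List.In c E -> c w = 0) /\ (forall c, List.In c S -> c w <= 0).

Inductive comb (E S : seq (V -> R)) : (V -> R) -> Prop :=
| comb0 : comb E S (fun _ => 0)
| combE c a h : List.In c E -> comb E S h -> comb E S (fun w => a * c w + h w)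
| combS c a h : List.In c S -> 0 <= a -> comb E S h -> comb E S (fun w => a * c w + h w).

Lemma comb_add E S h1 h2 : comb E S h1 -> comb E S h2 ->
  comb E S (fun w => h1 w + h2 w).
Proof.
elim=> [|c a h Hc _ IH|c a h Hc Ha _ IH] H2.
- by have -> : (fun w => 0 + h2 w) = h2 by apply: funext => w; rewrite add0r.
- have -> : (fun w => a * c w + h w + h2 w) = (fun w => a * c w + (h w + h2 w)).
    by apply: funext => w; rewrite addrA.
  by apply: combE => //; apply: IH.
- have -> : (fun w => a * c w + h w + h2 w) = (fun w => a * c w + (h w + h2 w)).
    by apply: funext => w; rewrite addrA.
  by apply: combS => //; apply: IH.
Qed.

Lemma comb_scale E S h k : 0 <= k -> comb E S h -> comb E S (fun w => k * h w).
Proof.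
move=> k0; elim=> [|c a h' Hc _ IH|c a h' Hc Ha _ IH].
- have -> : (fun w : V => k * 0) = (fun _ => 0) by apply: funext => w; rewrite mulr0.
  exact: comb0.
- have -> : (fun w => k * (a * c w + h' w)) = (fun w => (k * a) * c w + k * h' w).
    by apply: funext => w; rewrite mulrDr mulrA.
  exact: combE.
- have -> : (fun w => k * (a * c w + h' w)) = (fun w => (k * a) * c w + k * h' w).
    by apply: funext => w; rewrite mulrDr mulrA.
  by apply: combS => //; rewrite mulr_ge0.
Qed.

Lemma comb_weak E S E' S' h : (forall c, List.In c E -> List.In c E') ->
  (forall c, List.In c S -> List.In c S') -> comb E S h -> comb E' S' h.
Proof.
move=> HE HS; elim=> [|c a h' Hc _ IH|c a h' Hc Ha _ IH].
- exact: comb0.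
- by apply: combE => //; apply: HE.
- by apply: combS => //; apply: HS.
Qed.

Lemma comb_split c E S h : comb (c :: E) S h ->
  exists eta, exists2 h', comb E S h' & h = (fun w => eta * c w + h' w).
Proof.
elim=> [|c' a h' Hc _ [eta [h'' H1 H2]]|c' a h' Hc Ha _ [eta [h'' H1 H2]]].
- exists 0; exists (fun _ => 0); first exact: comb0.
  by apply: funext => w; rewrite mul0r addr0.
- case: Hc => [<-|Hc].
    exists (a + eta); exists h'' => //; rewrite H2; apply: funext => w.
    by rewrite mulrDl addrA.
  exists eta; exists (fun w => a * c' w + h'' w); first exact: combE.
  rewrite H2; apply: funext => w; rewrite addrCA //.
- exists eta; exists (fun w => a * c' w + h'' w); first exact: combS.
  rewrite H2; apply: funext => w; rewrite addrCA //.
Qed.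

Lemma sep1 (X : V -> Prop) (psi e : V -> R) p :
  (forall t x y, 0 < t < 1 -> X x -> X y ->
     X (cmb t x y) /\ psi (cmb t x y) <= (1 - t) * psi x + t * psi y) ->
  affineC e ->
  (forall w, X w -> e w = 0 -> p <= psi w) ->
  (exists w, X w /\ 0 < e w) -> (exists w, X w /\ e w < 0) ->
  exists a, forall w, X w -> p <= psi w + a * e w.
Proof.
move=> HX He H0 [w1 [Xw1 ew1]] [w2 [Xw2 ew2]].
have key : forall w w', X w -> 0 < e w -> X w' -> e w' < 0 ->
    (p - psi w) / e w <= (psi w' - p) / (- e w').
  move=> w w' Xw ew Xw' ew'.
  set a := e w; set b := - e w'.
  have b0 : 0 < b by rewrite /b oppr_gt0.
  set s := a + b.
  have s0 : 0 < s by rewrite /s addr_gt0.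
  have sn0 : s != 0 by rewrite gt_eqF.
  set t := a / s.
  have t01 : 0 < t < 1.
    apply/andP; split; first by rewrite divr_gt0.
    by rewrite ltr_pdivrMr // mul1r /s ltrDl.
  have [Xz Hz] := HX t w w' t01 Xw Xw'.
  have ez : e (cmb t w w') = 0.
    rewrite He -/a.
    have -> : e w' = - b by rewrite /b opprK.
    rewrite /t /s; field; exact: sn0.
  have := H0 _ Xz ez => Hp.
  have Hp2 := le_trans Hp Hz.
  have E1 : ((1 - t) * psi w + t * psi w') * s = b * psi w + a * psi w'.
    rewrite /t /s; field; rewrite -/s; exact: sn0.
  have Hp3 : p * s <= b * psi w + a * psi w'.
    by rewrite -E1 ler_wpM2r // ltW.
  rewrite ler_pdivrMr // mulrAC ler_pdivlMr //.
  rewrite /s in Hp3; nra.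
pose L := [set (p - psi w) / e w | w in [set w | X w /\ 0 < e w]].
have Lne : L !=set0 by exists ((p - psi w1) / e w1); exists w1.
have Lub : ubound L ((psi w2 - p) / (- e w2)).
  by move=> _ [w [Xw ew] <-]; apply: key.
have hL : has_ubound L by exists ((psi w2 - p) / (- e w2)).
exists (sup L) => w Xw.
have [ew|ew|ew] := ltgtP (e w) 0.
- have : sup L <= (psi w - p) / (- e w).
    by apply: ge_sup => // _ [w' [Xw' ew'] <-]; apply: key.
  have en : 0 < - e w by rewrite oppr_gt0.
  rewrite ler_pdivlMr // => H; nra.
- have : (p - psi w) / e w <= sup L by apply: ub_le_sup => //; exists w.
  rewrite ler_pdivrMr // => H; nra.
- by rewrite ew mulr0 addr0; apply: H0.
Qed.


Lemma fin_of (x : \bar R) : x != -oo%E -> (x < +oo)%E -> x = (fine x)%:E.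
Proof. by case: x. Qed.

Lemma affine_scale a c : affineC c -> affineC (fun w => a * c w).
Proof. by move=> Hc t x y; rewrite Hc; ring. Qed.

Lemma feas_cmb E S t x y : (forall c, List.In c E -> affineC c) ->
  (forall c, List.In c S -> affineC c) -> 0 < t < 1 ->
  feas E S x -> feas E S y -> feas E S (cmb t x y).
Proof.
move=> HE HS /andP[t0 t1] [Ex Sx] [Ey Sy]; split.
  by move=> c Hc; rewrite HE // Ex // Ey // !mulr0 addr0.
move=> c Hc; rewrite HS //.
have h1 : 0 <= 1 - t by rewrite subr_ge0 ltW.
have := Sx c Hc; have := Sy c Hc => a b; nra.
Qed.

Lemma Xconv E S phi : (forall c, List.In c E -> affineC c) ->
  (forall c, List.In c S -> affineC c) -> convR phi ->
  (forall w, phi w != -oo%E) ->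
  forall t x y, 0 < t < 1 ->
    (feas E S x /\ (phi x < +oo)%E) -> (feas E S y /\ (phi y < +oo)%E) ->
    (feas E S (cmb t x y) /\ (phi (cmb t x y) < +oo)%E) /\
    fine (phi (cmb t x y)) <= (1 - t) * fine (phi x) + t * fine (phi y).
Proof.
move=> HE HS Hc Hn t x y t01 [Fx Px] [Fy Py].
have := Hc t x y _ _ t01 (fin_of (Hn x) Px) (fin_of (Hn y) Py).
have := Hn (cmb t x y); case: (phi (cmb t x y)) => [v| |] //= _ Hv.
by split; [split; [exact: feas_cmb|exact: ltry] | rewrite -lee_fin].
Qed.

Lemma convR_add phi c : convR phi -> affineC c -> (forall w, phi w != -oo%E) ->
  convR (fun w => phi w + (c w)%:E)%E.
Proof.
move=> Hc Ha Hn t x y a b t01 Hx Hy.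
move: Hx Hy (Hc t x y) (Hn x) (Hn y) (Hn (cmb t x y)).
case: (phi x) => [u| |] //; case: (phi y) => [u'| |] //.
move=> [<-] [<-] /(_ u u' t01 erefl erefl).
case: (phi (cmb t x y)) => [v| |] //= Hv _ _ _.
rewrite -EFinD lee_fin; rewrite lee_fin in Hv; rewrite Ha.
have -> : (1 - t) * (u + c x) + t * (u' + c y) =
   ((1 - t) * u + t * u') + ((1 - t) * c x + t * c y) by ring.
by rewrite lerD2r.
Qed.

Definition phi2 (phi : V -> \bar R) (s : V -> R) w :=
  if (phi w < +oo)%E then (s w)%:E else +oo%E.

Lemma convR_phi2 phi s : convR phi -> affineC s -> (forall w, phi w != -oo%E) ->
  convR (phi2 phi s).
Proof.
move=> Hc Ha Hn t x y a b t01; rewrite /phi2.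
case: ifP => // Px; case: ifP => // Py [<-] [<-].
have := Hc t x y _ _ t01 (fin_of (Hn x) Px) (fin_of (Hn y) Py).
have := Hn (cmb t x y); case: (phi (cmb t x y)) => [v| |] //= _ Hv.
by rewrite ltry Ha.
Qed.

Lemma core_nil phi p : (forall w, feas [::] [::] w -> (p%:E <= phi w)%E) ->
  exists2 h, comb [::] [::] h & forall w, (p%:E <= phi w + (h w)%:E)%E.
Proof.
move=> Hp; exists (fun _ => 0); first exact: comb0.
by move=> w; rewrite adde0; apply: Hp; split.
Qed.

Theorem core n : forall E S phi w0 p, (size E + 2 * size S <= n)%N ->
  (forall c, List.In c E -> affineC c) -> (forall c, List.In c S -> affineC c) ->
  convR phi -> (forall w, phi w != -oo%E) -> (phi w0 < +oo)%E -> RIc phi w0 ->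
  feas E S w0 -> (forall w, feas E S w -> (p%:E <= phi w)%E) ->
  exists2 h, comb E S h & forall w, (p%:E <= phi w + (h w)%:E)%E.
Proof.
elim: n => [|n IH] E S phi w0 p Hn HE HS Hc Hninf Hw0 HRI Hf0 Hp.
  by move: Hn HE HS Hf0 Hp; case: E => //; case: S => // _ _ _ _; apply: core_nil.
case: S Hn HS Hf0 Hp => [|s S'] Hn HS Hf0 Hp.
  case: E Hn HE Hf0 Hp => [|e E'] Hn HE Hf0 Hp; first exact: core_nil.
  pose X w := feas E' [::] w /\ (phi w < +oo)%E.
  pose psi w := fine (phi w).
  have HE' : forall c, List.In c E' -> affineC c by move=> c Hc'; apply: HE; right.
  have He : affineC e by apply: HE; left.
  have HXc := Xconv HE' HS Hc Hninf.
  have H0 : forall w, X w -> e w = 0 -> p <= psi w.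
    move=> w [[Fw _] Pw] ew; rewrite -lee_fin /psi -fin_of //; apply: Hp.
    by split => // c [<-|Hc'] //; apply: Fw.
  have e0 : e w0 = 0 by apply: Hf0.1; left.
  have mir : forall w, X w -> exists2 w', X w' & exists2 k, 0 < k & e w' = - k * e w.
    move=> w [[Fw _] Pw]; have [k k0 Pk] := HRI w Pw.
    exists (cmb (-k) w0 w); last first.
      by exists k => //; rewrite He e0 mulr0 add0r.
    split => //; split => // c Hc'.
    by rewrite HE' // Fw // Hf0.1 //; [rewrite !mulr0 addr0 | right].
  have [a Ha] : exists a, forall w, X w -> p <= psi w + a * e w.
    case: (pselect (exists w, X w /\ 0 < e w)) => [[w1 [Xw1 ew1]]|Hnpos].
      apply: sep1 HXc He H0 _ _; first by exists w1.
      have [w' Xw' [k k0 ek]] := mir w1 Xw1; exists w'; split => //.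
      by rewrite ek mulNr oppr_lt0 mulr_gt0.
    case: (pselect (exists w, X w /\ e w < 0)) => [[w1 [Xw1 ew1]]|Hnneg].
      apply: sep1 HXc He H0 _ _; last by exists w1.
      have [w' Xw' [k k0 ek]] := mir w1 Xw1; exists w'; split => //.
      by rewrite ek mulNr -mulrN mulr_gt0 // oppr_gt0.
    exists 0 => w Xw; rewrite mul0r addr0; apply: H0 => //.
    have [ew|ew|//] := ltgtP (e w) 0.
      by case: Hnneg; exists w.
    by case: Hnpos; exists w.
  pose phi' w := (phi w + ((a * e w)%:E))%E.
  have Hn' : (size E' + 2 * size ([::] : seq (V -> R)) <= n)%N.
    by move: Hn; rewrite /= !addn0.
  have Hc' : convR phi' := convR_add Hc (affine_scale a He) Hninf.
  have Hninf' : forall w, phi' w != -oo%E.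
    by move=> w; rewrite /phi'; have := Hninf w; case: (phi w).
  have Hw0' : (phi' w0 < +oo)%E.
    by move: Hw0; rewrite /phi'; case: (phi w0) => [v| |] //= _; rewrite -EFinD ltry.
  have HRI' : RIc phi' w0.
    move=> w; rewrite /phi'; case Ew: (phi w) => [v| |] //; last first.
      by have := Hninf w; rewrite Ew.
    move=> _; have Pw : (phi w < +oo)%E by rewrite Ew ltry.
    have [k k0 Hk] := HRI w Pw.
    exists k => //; move: Hk (Hninf (cmb (-k) w0 w)).
    by case: (phi (cmb (-k) w0 w)) => [v'| |] //= _ _; rewrite -EFinD ltry.
  have Hf0' : feas E' [::] w0 by split => // c Hcc; apply: Hf0.1; right.
  have Hp' : forall w, feas E' [::] w -> (p%:E <= phi' w)%E.
    move=> w1 Fw; rewrite /phi'; case Ew: (phi w1) => [v| |] //; first last.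
      by have := Hninf w1; rewrite Ew.
      by rewrite leey.
      have Xw : X w1 by split => //; rewrite Ew ltry.
      have := Ha w1 Xw.
    by rewrite /psi Ew /= -EFinD lee_fin.
  have [h' Hh' Hph'] := IH E' [::] phi' w0 p Hn' HE' HS Hc' Hninf' Hw0' HRI' Hf0' Hp'.
  exists (fun w => a * e w + h' w).
    apply: combE; first by left.
    by apply: comb_weak Hh' => // c Hcc; right.
  by move=> w; rewrite EFinD addeA; apply: Hph'.
have HS' : forall c, List.In c S' -> affineC c by move=> c Hcc; apply: HS; right.
have Hs : affineC s by apply: HS; left.
pose X w := feas E S' w /\ (phi w < +oo)%E.
pose psi w := fine (phi w).
have HXc := Xconv HE HS' Hc Hninf.
have Hfs : forall w, feas E S' w -> s w <= 0 -> feas E (s :: S') w.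
  by move=> w [F1 F2] sw; split => // c [<-|Hcc] //; apply: F2.
have Hw0X : X w0 by split => //; case: Hf0 => F1 F2; split => // c Hcc; apply: F2; right.
have Hs0 : s w0 <= 0 by apply: Hf0.2; left.
have Hn2 : (size E + 2 * size S' <= n)%N.
  by move: Hn; rewrite /= mulnS; lia.
case: (pselect (exists w, X w /\ s w < 0)) => [Hneg|Hnneg].
  have [l l0 Hl] : exists2 l, 0 <= l & forall w, X w -> p <= psi w + l * s w.
    have H0 : forall w, X w -> s w <= 0 -> p <= psi w.
      move=> w [Fw Pw] sw; rewrite -lee_fin /psi -fin_of //; exact: Hp (Hfs _ Fw sw).
    case: (pselect (exists w, X w /\ 0 < s w)) => [Hpos|Hnpos].
      have [a Ha] := sep1 HXc Hs (fun w Xw sw => H0 w Xw ltac:(by rewrite sw)) Hpos Hneg.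
      have [a0|a0] := leP 0 a; first by exists a.
      exists 0 => // w Xw; rewrite mul0r addr0.
      have [sw|sw] := leP (s w) 0; first exact: H0.
      have := Ha w Xw; have : a * s w < 0 by rewrite nmulr_rlt0.
      move=> h1 h2; apply: (le_trans h2); by rewrite gerDl ltW.
    exists 0 => // w Xw; rewrite mul0r addr0; apply: H0 => //.
    by rewrite leNgt; apply/negP => sw; apply: Hnpos; exists w.
  pose phi' w := (phi w + ((l * s w)%:E))%E.
  have Hc' : convR phi' := convR_add Hc (affine_scale l Hs) Hninf.
  have Hninf' : forall w, phi' w != -oo%E.
    by move=> w; rewrite /phi'; have := Hninf w; case: (phi w).
  have Hw0' : (phi' w0 < +oo)%E.
    by move: Hw0; rewrite /phi'; case: (phi w0) => [v| |] //= _; rewrite -EFinD ltry.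
  have HRI' : RIc phi' w0.
    move=> w; rewrite /phi'; case Ew: (phi w) => [v| |] //; last first.
      by have := Hninf w; rewrite Ew.
    move=> _; have Pw : (phi w < +oo)%E by rewrite Ew ltry.
    have [k k0 Hk] := HRI w Pw.
    exists k => //; move: Hk (Hninf (cmb (-k) w0 w)).
    by case: (phi (cmb (-k) w0 w)) => [v'| |] //= _ _; rewrite -EFinD ltry.
  have Hp' : forall w, feas E S' w -> (p%:E <= phi' w)%E.
    move=> w1 Fw; rewrite /phi'; case Ew: (phi w1) => [v| |] //; first last.
      by have := Hninf w1; rewrite Ew.
      by rewrite leey.
    have Xw : X w1 by split => //; rewrite Ew ltry.
    have := Hl w1 Xw.
    by rewrite /psi Ew /= -EFinD lee_fin.
  have [h' Hh' Hph'] := IH E S' phi' w0 p Hn2 HE HS' Hc' Hninf' Hw0' HRI' Hw0X.1 Hp'.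
  exists (fun w => l * s w + h' w).
    apply: combS => //; first by left.
    by apply: comb_weak Hh' => // c Hcc; right.
  by move=> w; rewrite EFinD addeA; apply: Hph'.
have s0 : s w0 = 0.
  apply/eqP; rewrite eq_le Hs0 /= leNgt; apply/negP => sw.
  by apply: Hnneg; exists w0.
have Hn1 : (size (s :: E) + 2 * size S' <= n)%N.
  by move: Hn; rewrite /= mulnS; lia.
have HE1 : forall c, List.In c (s :: E) -> affineC c.
  by move=> c [<-|Hcc] //; apply: HE.
have Hf1 : feas (s :: E) S' w0.
  split; last by case: Hw0X => [[]].
  by move=> c [<-|Hcc] //; apply: Hf0.1.
have Hp1 : forall w, feas (s :: E) S' w -> (p%:E <= phi w)%E.
  move=> w [F1 F2]; apply: Hp; split; first by move=> c Hcc; apply: F1; right.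
  by move=> c [<-|Hcc]; [rewrite F1 //; left | apply: F2].
have [h1 Hh1 Hph1] := IH (s :: E) S' phi w0 p Hn1 HE1 HS' Hc Hninf Hw0 HRI Hf1 Hp1.
have [eta [h1' Hh1' Eh1]] := comb_split Hh1.
pose ph2 := phi2 phi s.
have Hc2 : convR ph2 := convR_phi2 Hc Hs Hninf.
have Hninf2 : forall w, ph2 w != -oo%E by move=> w; rewrite /ph2 /phi2; case: ifP.
have Hw02 : (ph2 w0 < +oo)%E by rewrite /ph2 /phi2 Hw0 ltry.
have HRI2 : RIc ph2 w0.
  move=> w; rewrite /ph2 /phi2; case: ifP => // Pw _.
  have [k k0 Hk] := HRI w Pw; exists k => //; by rewrite Hk ltry.
have Hp2 : forall w, feas E S' w -> ((0:R)%:E <= ph2 w)%E.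
  move=> w Fw; rewrite /ph2 /phi2; case: ifP => // Pw; last by rewrite leey.
  rewrite lee_fin leNgt; apply/negP => sw; apply: Hnneg; exists w; split => //.
have [h2 Hh2 Hph2] := IH E S' ph2 w0 0 Hn2 HE HS' Hc2 Hninf2 Hw02 HRI2 Hw0X.1 Hp2.
have Hh1w : comb E (s :: S') h1' by apply: comb_weak Hh1' => // c Hcc; right.
have Hh2w : comb E (s :: S') h2 by apply: comb_weak Hh2 => // c Hcc; right.
have key : forall w v, phi w = v%:E ->
    p <= v + eta * s w + h1' w /\ 0 <= s w + h2 w.
  move=> w v Ew; split.
    by have := Hph1 w; rewrite Ew Eh1 -EFinD lee_fin addrA.
  have := Hph2 w; rewrite /ph2 /phi2 Ew ltry -EFinD lee_fin //.
have [eta0|eta0] := leP 0 eta.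
  exists (fun w => eta * s w + h1' w); first by apply: combS => //; left.
  move=> w; case Ew: (phi w) => [v| |]; [|by rewrite leey|by have := Hninf w; rewrite Ew].
  by have [k1 _] := key w v Ew; rewrite -EFinD lee_fin addrA.
exists (fun w => h1' w + (- eta) * h2 w).
  apply: comb_add => //; apply: comb_scale => //; rewrite oppr_ge0 ltW //.
move=> w; case Ew: (phi w) => [v| |]; [|by rewrite leey|by have := Hninf w; rewrite Ew].
have [k1 k2] := key w v Ew; rewrite -EFinD lee_fin; nra.
Qed.
End Core.


Section Vec.
Variable R : realType.

Lemma dotvDl d (u1 u2 v : 'cV[R]_d) : dotv (u1 + u2) v = dotv u1 v + dotv u2 v.
Proof. by rewrite /dotv -big_split; apply: eq_bigr => i _; rewrite !mxE mulrDl. Qed.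
Lemma dotvDr d (u v1 v2 : 'cV[R]_d) : dotv u (v1 + v2) = dotv u v1 + dotv u v2.
Proof. by rewrite /dotv -big_split; apply: eq_bigr => i _; rewrite !mxE mulrDr. Qed.
Lemma dotvNl d (u v : 'cV[R]_d) : dotv (- u) v = - dotv u v.
Proof. by rewrite /dotv -sumrN; apply: eq_bigr => i _; rewrite !mxE mulNr. Qed.
Lemma dotvNr d (u v : 'cV[R]_d) : dotv u (- v) = - dotv u v.
Proof. by rewrite /dotv -sumrN; apply: eq_bigr => i _; rewrite !mxE mulrN. Qed.
Lemma dotvZl d c (u v : 'cV[R]_d) : dotv (c *: u) v = c * dotv u v.
Proof. by rewrite /dotv mulr_sumr; apply: eq_bigr => i _; rewrite !mxE mulrA. Qed.
Lemma dotvZr d c (u v : 'cV[R]_d) : dotv u (c *: v) = c * dotv u v.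
Proof. by rewrite /dotv mulr_sumr; apply: eq_bigr => i _; rewrite !mxE mulrCA. Qed.
Lemma dotvC d (u v : 'cV[R]_d) : dotv u v = dotv v u.
Proof. by rewrite /dotv; apply: eq_bigr => i _; rewrite mulrC. Qed.
Lemma dotv0l d (v : 'cV[R]_d) : dotv 0 v = 0.
Proof. by rewrite /dotv big1 // => i _; rewrite mxE mul0r. Qed.
Lemma dotv_ge0 d (v : 'cV[R]_d) : 0 <= dotv v v.
Proof. by rewrite /dotv sumr_ge0 // => i _; rewrite -expr2 sqr_ge0. Qed.
Lemma dotv_tr d e (M : 'M[R]_(e, d)) (y : 'cV[R]_e) (x : 'cV[R]_d) :
  dotv (M^T *m y) x = dotv y (M *m x).
Proof.
rewrite /dotv.
have -> : \sum_(i < d) (M^T *m y) i 0 * x i 0 =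
          \sum_(i < d) \sum_(j < e) M j i * y j 0 * x i 0.
  by apply: eq_bigr => i _; rewrite !mxE mulr_suml; apply: eq_bigr => j _; rewrite mxE.
rewrite exchange_big; apply: eq_bigr => j _; rewrite !mxE mulr_sumr.
by apply: eq_bigr => i _; rewrite ?mxE; ring.
Qed.
Lemma dotv_col d (y : 'cV[R]_d) k a (v : 'cV[R]_d) :
  dotv (\col_i (y i 0 + (if i == k then a else 0))) v = dotv y v + a * v k 0.
Proof.
rewrite /dotv.
have -> : \sum_(i < d) (\col_i (y i 0 + (if i == k then a else 0))) i 0 * v i 0 =
  \sum_(i < d) y i 0 * v i 0 + \sum_(i < d) (if i == k then a * v i 0 else 0).
  rewrite -big_split; apply: eq_bigr => i _; rewrite mxE mulrDl; congr (_ + _).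
  by case: eqP; rewrite ?mul0r.
by rewrite -big_mkcond big_pred1_eq.
Qed.

Lemma In_mem (T : eqType) (x : T) s : x \in s -> List.In x s.
Proof. by elim: s => //= a s IH; rewrite inE => /orP[/eqP ->|/IH]; [left|right]. Qed.

End Vec.

Section Rep.
Variable R : realType.

Definition cmb2 d (t : R) (w1 w2 : 'cV[R]_d * R) : 'cV[R]_d * R :=
  ((1 - t) *: w1.1 + t *: w2.1, (1 - t) * w1.2 + t * w2.2).

Definition RIs d (F : 'cV[R]_d * R -> \bar R) w0 := forall w, (F w < +oo)%E ->
  exists2 e : R, 0 < e & forall e', 0 < e' <= e -> (F (cmb2 (-e') w0 w) < +oo)%E.

Lemma map_In (T U : Type) (G : T -> U) (s : seq T) c :
  List.In c (map G s) -> exists i, c = G i.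
Proof. by elim: s => //= a s IH [<-|/IH]; [exists a|]. Qed.

Lemma In_map_enum (T : finType) (U : Type) (G : T -> U) i : List.In (G i) (map G (enum T)).
Proof. by apply: List.in_map; apply: In_mem; rewrite mem_enum. Qed.

Lemma fin_of' (x : \bar R) : x != -oo%E -> (x < +oo)%E -> x = (fine x)%:E.
Proof. by case: x. Qed.

Lemma rep d (f : 'cV[R]_d -> \bar R) x0 :
  convex_efun f -> (forall x, f x != -oo%E) ->
  rel_int (edom f) x0 \/ (polyhedral_fun f /\ edom f x0) ->
  exists F : 'cV[R]_d * R -> \bar R, exists C : seq ('cV[R]_d * R -> R),
  [/\ (forall c, List.In c C -> affineC (@cmb2 d) c),
      convR (@cmb2 d) F /\ (forall w, F w != -oo%E),
      (forall x t, (forall c, List.In c C -> c (x,t) <= 0) -> (f x <= F (x,t))%E),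
      (forall x, (f x < +oo)%E -> exists t,
         (forall c, List.In c C -> c (x,t) <= 0) /\ (F (x,t) <= f x)%E) &
      (exists t0, [/\ (F (x0,t0) < +oo)%E, (forall c, List.In c C -> c (x0,t0) <= 0)
                   & RIs F (x0,t0)])].
Proof.
move=> Hcf Hn [[Dx0 [e e0 He]]|[[k [Cm [ee [dd Hiff]]]] Dx0]].
- exists (fun w => f w.1), [::]; split => //.
  + split => //; move=> t [x a'] [y b'] a b t01 /= Hx Hy.
    by have := Hcf x y t t01; rewrite Hx Hy -!EFinM -EFinD.
  + by move=> x Fx; exists 0.
  exists 0; split => // -[x t] /= Fx.
  pose D := dotv (x0 - x) (x0 - x).
  have D0 : 0 <= D by apply: dotv_ge0.
  pose eps := e ^+ 2 / (e ^+ 2 + D + 1).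
  have den : 0 < e ^+ 2 + D + 1 by rewrite -addrA ltr_wpDl ?sqr_ge0 // ltr_pwDr.
  have epsE : eps * (e ^+ 2 + D + 1) = e ^+ 2.
    by rewrite /eps mulfVK // gt_eqF.
  have eps0 : 0 < eps by rewrite divr_gt0 // exprn_gt0.
  clearbody eps.
  exists eps => // e' /andP[e'0 e'e].
  apply: He.
    exists 2%N, (fun i : 'I_2 => if i == ord0 then 1 + e' else - e'),
      (fun i : 'I_2 => if i == ord0 then x0 else x); split.
    + by move=> i; case: ifP.
    + by rewrite big_ord_recl big_ord1 /=; ring.
    + rewrite big_ord_recl big_ord1 /=.
      by apply/matrixP => i j; rewrite !mxE; ring.
  have -> : (1 - - e') *: x0 + - e' *: x - x0 = e' *: (x0 - x).
    by apply/matrixP => i j; rewrite !mxE; ring.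
  rewrite dotvZl dotvZr -/D.
  have e2 : 0 < e ^+ 2 by rewrite exprn_gt0.
  have h1 : eps * D < e ^+ 2.
    have : eps * D = e ^+ 2 - eps * (e ^+ 2 + 1) by rewrite -{1}epsE; ring.
    move=> ->; have : 0 < eps * (e ^+ 2 + 1) by rewrite mulr_gt0 // addr_gt0.
    lra.
  have h2 : eps < 1.
    have : eps * (e ^+ 2 + D + 1) < 1 * (e ^+ 2 + D + 1) by rewrite epsE mul1r; lra.
    by rewrite ltr_pM2r.
  have h3 : e' * D <= eps * D by rewrite ler_wpM2r.
  have h4 : e' * (e' * D) <= e' * D.
    have e'1 : e' <= 1 by lra.
    have eD : 0 <= e' * D by rewrite mulr_ge0 // ltW.
    by rewrite -[X in _ <= X](mul1r (e' * D)) ler_wpM2r.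
  lra.
- have Hin : forall c, List.In c (map (fun i (w : 'cV[R]_d * R) =>
      (Cm *m w.1) i 0 + ee i 0 * w.2 - dd i 0) (enum 'I_k)) ->
      exists i, c = (fun w => (Cm *m w.1) i 0 + ee i 0 * w.2 - dd i 0).
    by move=> c Hc; apply: map_In Hc.
  have Hiff' : forall x t, (f x <= t%:E)%E <-> forall c, List.In c (map (fun i (w : 'cV[R]_d * R) =>
      (Cm *m w.1) i 0 + ee i 0 * w.2 - dd i 0) (enum 'I_k)) -> c (x, t) <= 0.
    move=> x t; rewrite Hiff; split.
      by move=> H c /Hin [i ->] /=; rewrite subr_le0.
    move=> H i; rewrite -subr_le0.
    exact: (H _ (In_map_enum (fun i (w : 'cV[R]_d * R) =>
      (Cm *m w.1) i 0 + ee i 0 * w.2 - dd i 0) i)).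
  exists (fun w => (w.2)%:E), (map (fun i (w : 'cV[R]_d * R) =>
      (Cm *m w.1) i 0 + ee i 0 * w.2 - dd i 0) (enum 'I_k)); split => //.
  + move=> c /Hin [i ->] t [x a] [y b'] /=.
    by rewrite mulmxDr -!scalemxAr !mxE; ring.
  + split => //; by move=> t [x a'] [y b'] a b t01 /= [->] [->].
  + by move=> x t /Hiff'.
  + move=> x Fx; exists (fine (f x)); split; last by rewrite /= -fin_of'.
    by apply: (proj1 (Hiff' _ _)); rewrite -fin_of'.
  exists (fine (f x0)); split => //.
  + by rewrite /= ltry.
  + by apply: (proj1 (Hiff' _ _)); rewrite -fin_of'.
  + by move=> w _; exists 1 => // e' _; rewrite ltry.
Qed.

End Rep.

Section Main.
Variable R : realType.
Variables n m r : nat.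
Variable f : 'cV[R]_n -> \bar R.
Variable g : 'cV[R]_m -> \bar R.
Variable A : 'M[R]_(m, n).
Variable B : 'M[R]_(r, n).
Variable b : 'cV[R]_r.

Local Notation V := (('cV[R]_n * R) * ('cV[R]_m * R))%type.

Definition cmbV (t : R) (w1 w2 : V) : V := (cmb2 t w1.1 w2.1, cmb2 t w1.2 w2.2).

Lemma mx_aff p q (M : 'M[R]_(p, q)) t (x y : 'cV[R]_q) i :
  (M *m ((1 - t) *: x + t *: y)) i 0 = (1 - t) * (M *m x) i 0 + t * (M *m y) i 0.
Proof. by rewrite mulmxDr -!scalemxAr !mxE. Qed.

Lemma add_ninf (x y : \bar R) : x != -oo%E -> y != -oo%E -> (x + y)%E != -oo%E.
Proof. by case: x => [x| |]; case: y. Qed.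

Lemma add_split (x y : \bar R) a : x != -oo%E -> y != -oo%E -> (x + y)%E = a%:E ->
  exists x', exists y', [/\ x = x'%:E, y = y'%:E & a = x' + y'].
Proof. by case: x => [x| |]; case: y => [y| |] //= _ _ [<-]; exists x, y. Qed.

Lemma add_lty (x y : \bar R) : (x < +oo)%E -> (y < +oo)%E -> (x + y < +oo)%E.
Proof. by case: x => [x| |]; case: y => [y| |] //= _ _; rewrite ltry. Qed.

Lemma add_lty_l (x y : \bar R) : x != -oo%E -> y != -oo%E -> (x + y < +oo)%E -> (x < +oo)%E /\ (y < +oo)%E.
Proof. by move=> Hx Hy Hs; split; move: Hx Hy Hs; case: x => [x| |]; case: y => [y| |] //= _ _ _; rewrite ltry. Qed.

Lemma mem_In (T : eqType) (x : T) s : List.In x s -> x \in s.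
Proof.
elim: s => //= a s IH [->|H]; rewrite inE; first by rewrite eqxx.
by rewrite IH // orbT.
Qed.

Lemma map_In2 (T U : Type) (G : T -> U) (s : seq T) c :
  List.In c (map G s) -> exists i, List.In i s /\ c = G i.
Proof.
elim: s => //= a s IH [<-|/IH [i [Hi ->]]]; first by exists a; split => //; left.
by exists i; split => //; right.
Qed.

Definition EA := map (fun k (w : V) => (A *m w.1.1 - w.2.1) k 0) (enum 'I_m).
Definition SB (S : {set 'I_r}) := map (fun i (w : V) => (B *m w.1.1 - b) i 0) (enum S).
Definition Lf (C : seq ('cV[R]_n * R -> R)) := map (fun c (w : V) => c w.1) C.
Definition Lg (D : seq ('cV[R]_m * R -> R)) := map (fun c (w : V) => c w.2) D.

Lemma decomp S C D h : comb (EA) (SB S ++ (Lf C ++ Lg D)) h ->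
  exists y : 'cV[R]_m, exists z : 'cV[R]_r, exists hf, exists hg,
  [/\ (forall i, 0 <= z i 0) /\ (forall i, i \notin S -> z i 0 = 0),
      (forall v, (forall c, List.In c C -> c v <= 0) -> hf v <= 0),
      (forall v, (forall c, List.In c D -> c v <= 0) -> hg v <= 0) &
      forall w : V, h w = dotv y (A *m w.1.1 - w.2.1) + dotv z (B *m w.1.1 - b)
                         + hf w.1 + hg w.2].
Proof.
elim=> [|c a h' Hc _ [y [z [hf [hg [[z0 zS] Hf Hg Hh]]]]]
        |c a h' Hc Ha _ [y [z [hf [hg [[z0 zS] Hf Hg Hh]]]]]].
- exists 0, 0, (fun _ => 0), (fun _ => 0); split => //.
    by split => i; rewrite mxE.
  by move=> w; rewrite !dotv0l !addr0.
- have [k ->] := map_In Hc.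
  exists (\col_i (y i 0 + (if i == k then a else 0))), z, hf, hg; split => //.
  by move=> w; rewrite dotv_col Hh; ring.
- case/List.in_app_iff: Hc => [Hc|/List.in_app_iff [Hc|Hc]].
  + have [i [Hi ->]] := map_In2 Hc.
    have iS : i \in S by rewrite -mem_enum; apply: mem_In.
    exists y, (\col_j (z j 0 + (if j == i then a else 0))), hf, hg; split => //.
    * split => j; rewrite mxE.
        by rewrite addr_ge0 //; case: ifP.
      move=> jS; rewrite zS //; case: eqP => [ji|]; last by rewrite addr0.
      by rewrite ji iS in jS.
    * by move=> w; rewrite dotv_col Hh; ring.
  + have [c0 [Hc0 ->]] := map_In2 Hc.
    exists y, z, (fun v => a * c0 v + hf v), hg; split => //.
    * move=> v Hv; have := Hv c0 Hc0; have := Hf v Hv => h1 h2; nra.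
    * by move=> w; rewrite Hh; ring.
  + have [c0 [Hc0 ->]] := map_In2 Hc.
    exists y, z, hf, (fun v => a * c0 v + hg v); split => //.
    * move=> v Hv; have := Hv c0 Hc0; have := Hg v Hv => h1 h2; nra.
    * by move=> w; rewrite Hh; ring.
Qed.

End Main.


Section Main2.
Variable R : realType.
Variables n m r : nat.
Variable f : 'cV[R]_n -> \bar R.
Variable g : 'cV[R]_m -> \bar R.
Variable A : 'M[R]_(m, n).
Variable B : 'M[R]_(r, n).
Variable b : 'cV[R]_r.

Local Notation V := (('cV[R]_n * R) * ('cV[R]_m * R))%type.

Lemma ereal3 (a1 a2 a3 q : R) : (q%:E <= a1%:E + a2%:E + a3%:E)%E -> q <= a1 + a2 + a3.
Proof. by rewrite -!EFinD lee_fin. Qed.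

Lemma core_app (F : 'cV[R]_n * R -> \bar R) C (G : 'cV[R]_m * R -> \bar R) D
  x0 t0 s0 (S : {set 'I_r}) p :
  (forall c, List.In c C -> affineC (@cmb2 R n) c) ->
  convR (@cmb2 R n) F /\ (forall w, F w != -oo%E) ->
  (forall x t, (forall c, List.In c C -> c (x,t) <= 0) -> (f x <= F (x,t))%E) ->
  (forall x, (f x < +oo)%E -> exists t,
         (forall c, List.In c C -> c (x,t) <= 0) /\ (F (x,t) <= f x)%E) ->
  [/\ (F (x0,t0) < +oo)%E, (forall c, List.In c C -> c (x0,t0) <= 0) & RIs F (x0,t0)] ->
  (forall c, List.In c D -> affineC (@cmb2 R m) c) ->
  convR (@cmb2 R m) G /\ (forall w, G w != -oo%E) ->
  (forall x t, (forall c, List.In c D -> c (x,t) <= 0) -> (g x <= G (x,t))%E) ->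
  (forall x, (g x < +oo)%E -> exists t,
         (forall c, List.In c D -> c (x,t) <= 0) /\ (G (x,t) <= g x)%E) ->
  [/\ (G (A *m x0,s0) < +oo)%E, (forall c, List.In c D -> c (A *m x0,s0) <= 0)
     & RIs G (A *m x0,s0)] ->
  (forall i, (B *m x0) i 0 <= b i 0) ->
  (forall x, (forall i, i \in S -> (B *m x) i 0 <= b i 0) ->
     (p%:E <= f x + g (A *m x))%E) ->
  exists y : 'cV[R]_m, exists2 z : 'cV[R]_r,
    (forall i, 0 <= z i 0) /\ (forall i, i \notin S -> z i 0 = 0) &
    forall x u fx gu, f x = fx%:E -> g u = gu%:E ->
      p <= fx + gu + dotv y (A *m x - u) + dotv z (B *m x - b).
Proof.
move=> HCa [HFc HFn] HFle HFge [HF0 HC0 HFri] HDa [HGc HGn] HGle HGge [HG0 HD0 HGri] HBx0 Hp.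
pose Phi (w : V) := (F w.1 + G w.2)%E.
pose w0 : V := ((x0, t0), (A *m x0, s0)).
pose Sin := SB m B b S ++ (Lf m C ++ Lg n D).
have HEa : forall c, List.In c (EA A) -> affineC (@cmbV R n m) c.
  move=> c Hc; have [k ->] := map_In Hc; rewrite /affineC.
  move=> t [[x1 a1] [u1 b1]] [[x2 a2] [u2 b2]] /=.
  rewrite mulmxDr -!scalemxAr !mxE; ring.
have HSa : forall c, List.In c Sin -> affineC (@cmbV R n m) c.
  move=> c /List.in_app_iff [Hc|/List.in_app_iff [Hc|Hc]]; rewrite /affineC.
  - have [i [_ ->]] := map_In2 Hc.
    move=> t [[x1 a1] [u1 b1]] [[x2 a2] [u2 b2]] /=.
    rewrite mulmxDr -!scalemxAr !mxE; ring.
  - have [c0 [Hc0 ->]] := map_In2 Hc.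
    by move=> t w1 w2 /=; rewrite (HCa c0 Hc0).
  - have [c0 [Hc0 ->]] := map_In2 Hc.
    by move=> t w1 w2 /=; rewrite (HDa c0 Hc0).
have Hninf : forall w, Phi w != -oo%E by move=> w; apply: add_ninf.
have Hconv : convR (@cmbV R n m) Phi.
  move=> t w1 w2 a1 a2 t01 E1 E2.
  have [x1 [y1 [Ex1 Ey1 ->]]] := add_split (HFn _) (HGn _) E1.
  have [x2 [y2 [Ex2 Ey2 ->]]] := add_split (HFn _) (HGn _) E2.
  apply: le_trans (leeD (HFc t _ _ _ _ t01 Ex1 Ex2) (HGc t _ _ _ _ t01 Ey1 Ey2)) _.
  by rewrite -EFinD lee_fin le_eqVlt; apply/orP; left; apply/eqP; ring.
have HPhi0 : (Phi w0 < +oo)%E by apply: add_lty.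
have HRI : RIc (@cmbV R n m) Phi w0.
  move=> w Hw; have [H1 H2] := add_lty_l (HFn _) (HGn _) Hw.
  have [e1 e10 He1] := HFri _ H1; have [e2 e20 He2] := HGri _ H2.
  exists (Num.min e1 e2); first by rewrite lt_min e10 e20.
  apply: add_lty.
    by apply: He1; rewrite lt_min e10 e20 /= ge_min lexx.
  by apply: He2; rewrite lt_min e10 e20 /= ge_min lexx orbT.
have Hf0 : feas (EA A) Sin w0.
  split.
    by move=> c Hc; have [k ->] := map_In Hc; rewrite /= !mxE subrr.
  move=> c /List.in_app_iff [Hc|/List.in_app_iff [Hc|Hc]].
  - have [i [_ ->]] := map_In2 Hc.
    by move: (HBx0 i); rewrite /= !mxE subr_le0.
  - by have [c0 [Hc0 ->]] := map_In2 Hc; apply: HC0.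
  - by have [c0 [Hc0 ->]] := map_In2 Hc; apply: HD0.
have Hpf : forall w, feas (EA A) Sin w -> (p%:E <= Phi w)%E.
  move=> [[x t] [u s]] [FE FS].
  have Hu : u = A *m x.
    apply/matrixP => k j; rewrite (ord1 j).
    have := FE _ (In_map_enum (fun k (w : V) => (A *m w.1.1 - w.2.1) k 0) k).
    by rewrite /= !mxE => /eqP; rewrite subr_eq0 => /eqP <-.
  subst u.
  have HS : forall i, i \in S -> (B *m x) i 0 <= b i 0.
    move=> i iS.
    have Hi : List.In i (enum S) by apply: In_mem; rewrite mem_enum.
    have Hc : List.In (fun w : V => (B *m w.1.1 - b) i 0) Sin.
      apply: List.in_or_app; left.
      exact: (List.in_map (fun i (w : V) => (B *m w.1.1 - b) i 0) _ _ Hi).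
    have E : (B *m x - b) i 0 = (B *m x) i 0 - b i 0 by rewrite !mxE.
    by move: (FS _ Hc) => /=; rewrite E subr_le0.
  have HC : forall c, List.In c C -> c (x, t) <= 0.
    move=> c Hc; have Hc' : List.In (fun w : V => c w.1) Sin.
      apply: List.in_or_app; right; apply: List.in_or_app; left.
      exact: (List.in_map (fun c (w : V) => c w.1) _ _ Hc).
    exact: (FS _ Hc').
  have HD : forall c, List.In c D -> c (A *m x, s) <= 0.
    move=> c Hc; have Hc' : List.In (fun w : V => c w.2) Sin.
      apply: List.in_or_app; right; apply: List.in_or_app; right.
      exact: (List.in_map (fun c (w : V) => c w.2) _ _ Hc).
    exact: (FS _ Hc').
  apply: le_trans (Hp x HS) _.
  exact: leeD (HFle _ _ HC) (HGle _ _ HD).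
have [h Hh Hph] := @core R V (@cmbV R n m) _ (EA A) Sin Phi w0 p (leqnn _)
  HEa HSa Hconv Hninf HPhi0 HRI Hf0 Hpf.
have [y [z [hf [hg [[z0 zS] Hf Hg Hhw]]]]] := decomp Hh.
exists y; exists z => //.
move=> x u fx gu Efx Egu.
have [t [Ct Ft]] := HFge x ltac:(by rewrite Efx ltry).
have [s [Ds Gs]] := HGge u ltac:(by rewrite Egu ltry).
have := Hph ((x, t), (u, s)); rewrite Hhw /= /Phi /=.
move: Ft Gs (HFn (x, t)) (HGn (u, s)) (Hf _ Ct) (Hg _ Ds).
rewrite Efx Egu.
case: (F (x, t)) => [Fv| |] //; case: (G (u, s)) => [Gv| |] //.
rewrite !lee_fin => h1 h2 _ _ h3 h4; move/ereal3 => h5; lra.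
Qed.
End Main2.


Section Main3.
Variable R : realType.
Variables n m r : nat.
Variable f : 'cV[R]_n -> \bar R.
Variable g : 'cV[R]_m -> \bar R.
Variable A : 'M[R]_(m, n).
Variable B : 'M[R]_(r, n).
Variable b : 'cV[R]_r.
Hypothesis Hfn : forall x, f x != -oo%E.
Hypothesis Hgn : forall u, g u != -oo%E.

Lemma key_id (y : 'cV[R]_m) (z : 'cV[R]_r) x u :
  dotv (- (A^T *m y) - B^T *m z) x + dotv y u + dotv b z =
  - (dotv y (A *m x - u) + dotv z (B *m x - b)).
Proof.
rewrite dotvDl !dotvNl !dotv_tr dotvDr dotvNr (dotvDr z) dotvNr (dotvC b z).
ring.
Qed.

Lemma conj_le (y : 'cV[R]_m) (z : 'cV[R]_r) p x1 fx1 u1 gu1 :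
  f x1 = fx1%:E -> g u1 = gu1%:E ->
  (forall x u fx gu, f x = fx%:E -> g u = gu%:E ->
      p <= fx + gu + dotv y (A *m x - u) + dotv z (B *m x - b)) ->
  (Xi f g A B b y z <= (- p)%:E)%E.
Proof.
move=> Ex1 Eu1 Hk.
set q := - (A^T *m y) - B^T *m z.
have key : forall x u fx gu, f x = fx%:E -> g u = gu%:E ->
    (dotv q x - fx) + (dotv y u - gu) <= - p - dotv b z.
  move=> x u fx gu Ex Eu; have := Hk x u fx gu Ex Eu.
  have := key_id y z x u; rewrite -/q => h; lra.
have HA : forall u gu, g u = gu%:E ->
    (conj_fun f q <= (- p - dotv b z - (dotv y u - gu))%:E)%E.
  move=> u gu Eu; apply: ge_ereal_sup => _ [x _ <-].
  move: (Hfn x) (key x u) ; case: (f x) => [fx| |] //; last by rewrite /= leNye.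
  by move=> _ /(_ fx gu erefl Eu) h; rewrite -EFinD lee_fin; lra.
have HB : ((dotv q x1 - fx1)%:E <= conj_fun f q)%E.
  by apply: ereal_sup_ubound; exists x1 => //; rewrite Ex1.
have : conj_fun f q = (fine (conj_fun f q))%:E.
  move: HB (HA u1 gu1 Eu1); case: (conj_fun f q) => //.
move: (fine (conj_fun f q)) => al Eal.
have HC : (conj_fun g y <= (- p - dotv b z - al)%:E)%E.
  apply: ge_ereal_sup => _ [u _ <-].
  move: (Hgn u) (HA u); case: (g u) => [gu| |] //; last by rewrite /= leNye.
  by move=> _ /(_ gu erefl); rewrite Eal -EFinD !lee_fin => h; lra.
have HD : ((dotv y u1 - gu1)%:E <= conj_fun g y)%E.
  by apply: ereal_sup_ubound; exists u1 => //; rewrite Eu1.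
have : conj_fun g y = (fine (conj_fun g y))%:E.
  move: HD HC; case: (conj_fun g y) => //.
move: (fine (conj_fun g y)) => be Ebe.
rewrite /Xi -/q Eal Ebe -!EFinD lee_fin.
rewrite Ebe lee_fin in HC; lra.
Qed.


Definition Val (S : {set 'I_r}) : set R := [set v | exists x,
  (forall i, i \in S -> (B *m x) i 0 <= b i 0) /\ (f x + g (A *m x))%E = v%:E].
Definition pS S := inf (Val S).

Variable c0 : R.
Hypothesis Hc0 : forall x, (c0%:E <= f x + g (A *m x))%E.
Variable x0 : 'cV[R]_n.
Hypothesis Hx0f : (f x0 < +oo)%E.
Hypothesis Hx0g : (g (A *m x0) < +oo)%E.
Hypothesis Hx0B : forall i, (B *m x0) i 0 <= b i 0.

Lemma Val_ne (S : {set 'I_r}) : Val S !=set0.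
Proof.
case Ef: (f x0) Hx0f (Hfn x0) => [a| |] // _ _.
case Eg: (g (A *m x0)) Hx0g (Hgn (A *m x0)) => [a'| |] // _ _.
by exists (a + a'), x0; split; [move=> i _ | rewrite Ef Eg].
Qed.

Lemma Val_lb (S : {set 'I_r}) : has_lbound (Val S).
Proof.
exists c0 => v [x [_ Ev]]; have := Hc0 x; by rewrite Ev lee_fin.
Qed.

Lemma pS_lb (S : {set 'I_r}) x : (forall i, i \in S -> (B *m x) i 0 <= b i 0) ->
  ((pS S)%:E <= f x + g (A *m x))%E.
Proof.
move=> Hx; have := add_ninf (Hfn x) (Hgn (A *m x)).
case Ev: (f x + g (A *m x))%E => [v| |] // _; last by rewrite leey.
by rewrite lee_fin; apply: ge_inf; [exact: Val_lb | exists x].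
Qed.

Lemma pS_glb (S : {set 'I_r}) xi : (forall x v, (forall i, i \in S -> (B *m x) i 0 <= b i 0) ->
    (f x + g (A *m x))%E = v%:E -> xi <= v) -> xi <= pS S.
Proof.
move=> H; apply: lb_le_inf; first exact: Val_ne.
by move=> v [x [Hx Ev]]; apply: H Ev.
Qed.

Lemma conj_f_ninf q : conj_fun f q != -oo%E.
Proof.
have : ((dotv q x0 - fine (f x0))%:E <= conj_fun f q)%E.
  apply: ereal_sup_ubound; exists x0 => //.
  by move: Hx0f (Hfn x0); case: (f x0).
by case: (conj_fun f q).
Qed.

Lemma conj_g_ninf y : conj_fun g y != -oo%E.
Proof.
have : ((dotv y (A *m x0) - fine (g (A *m x0)))%:E <= conj_fun g y)%E.
  apply: ereal_sup_ubound; exists (A *m x0) => //.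
  by move: Hx0g (Hgn (A *m x0)); case: (g (A *m x0)).
by case: (conj_fun g y).
Qed.

Lemma Xi_ninf (y : 'cV[R]_m) (z : 'cV[R]_r) : Xi f g A B b y z != -oo%E.
Proof.
rewrite /Xi; move: (conj_f_ninf (- (A^T *m y) - B^T *m z)) (conj_g_ninf y).
by case: (conj_fun f _) => [?| |]; case: (conj_fun g y) => [?| |].
Qed.

Lemma weak (y : 'cV[R]_m) (z : 'cV[R]_r) : (forall i, 0 <= z i 0) ->
  ((- pS [set i | z i 0 != 0]%SET)%:E <= Xi f g A B b y z)%E.
Proof.
move=> z0; set T := [set i | z i 0 != 0]%SET.
set q := - (A^T *m y) - B^T *m z.
rewrite /Xi -/q.
move: (conj_f_ninf q) (conj_g_ninf y) (@ereal_sup_ubound _ [set ((dotv q x)%:E - f x)%E | x in [set: 'cV[R]_n]])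
  (@ereal_sup_ubound _ [set ((dotv y u)%:E - g u)%E | u in [set: 'cV[R]_m]]).
rewrite -/(conj_fun f q) -/(conj_fun g y).
case: (conj_fun f q) => [al| |] //; case: (conj_fun g y) => [be| |] //; try by rewrite /= leey.
move=> _ _ Ub1 Ub2; rewrite -!EFinD lee_fin.
suff : - (al + be + dotv b z) <= pS T by lra.
apply: pS_glb => x v Hx Ev.
have [fx [gu [Efx Egu ->]]] := add_split (Hfn x) (Hgn (A *m x)) Ev.
have h1 : dotv q x - fx <= al.
  by rewrite -lee_fin EFinB -Efx; apply: Ub1; exists x.
have h2 : dotv y (A *m x) - gu <= be.
  by rewrite -lee_fin EFinB -Egu; apply: Ub2; exists (A *m x).
have h3 : 0 <= dotv z (b - B *m x).
  rewrite /dotv sumr_ge0 // => i _.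
  have E : (b - B *m x) i 0 = b i 0 - (B *m x) i 0 by rewrite !mxE.
  rewrite E; have [zi|zi] := eqVneq (z i 0) 0; first by rewrite zi mul0r.
  rewrite mulr_ge0 // subr_ge0; apply: Hx; rewrite inE; exact: zi.
have := key_id y z x (A *m x); rewrite -/q.
rewrite subrr (dotvC y 0) dotv0l add0r dotvDr dotvNr (dotvC b z).
rewrite dotvDr dotvNr in h3.
move=> h4; lra.
Qed.

End Main3.

Unset Implicit Arguments.

Lemma le_plus_oo (R : realType) (v x : \bar R) (a : R) : x != -oo%E ->
  (v <= x + (a%:E + +oo))%E.
Proof. by case: x => [x| |] // _; rewrite leey. Qed.

Theorem mainTheorem5 (R : realType) (n m r : nat)
  (f : 'cV[R]_n -> \bar R) (g : 'cV[R]_m -> \bar R)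
  (A : 'M[R]_(m, n)) (B : 'M[R]_(r, n)) (b : 'cV[R]_r) :
  plsc_convex f -> plsc_convex g ->
  (exists c : R, forall x : 'cV[R]_n, (c%:E <= f x + g (A *m x))%E) ->
  (exists x : 'cV[R]_n,
     [/\ rel_int (edom f) x \/ (polyhedral_fun f /\ edom f x),
         rel_int (edom g) (A *m x) \/ (polyhedral_fun g /\ edom g (A *m x))
       & forall i, (B *m x) i 0 <= b i 0]) ->
  forall mu : 'cV[R]_r, (forall i, 0 < mu i 0) ->
    exists (y0 : 'cV[R]_m) (z0 : 'cV[R]_r),
      forall (y : 'cV[R]_m) (z : 'cV[R]_r),
        (Xi f g A B b y0 z0 + Psi_plus mu z0 <= Xi f g A B b y z + Psi_plus mu z)%E.
Proof.
move=> [[Hfn _] _ Hfc] [[Hgn _] _ Hgc] [c Hc] [x0 [Hf0 Hg0 HB0]] mu Hmu.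
have Df : (f x0 < +oo)%E by case: Hf0 => [[]|[]].
have Dg : (g (A *m x0) < +oo)%E by case: Hg0 => [[]|[]].
have [F [C [HCa HFcv HFle HFge [t0 [HF0 HC0 HFri]]]]] := rep Hfc Hfn Hf0.
have [G [D [HDa HGcv HGle HGge [s0 [HG0 HD0 HGri]]]]] := rep Hgc Hgn Hg0.
pose val (S : {set 'I_r}) := - pS f g A B b S + \sum_(i in S) mu i 0.
case: (@arg_minP _ R {set 'I_r} [set: 'I_r]%SET xpredT val isT) => S0 _ HS0.
have [y [z [z0 zS] Hk]] := @core_app R n m r f g A B b F C G D x0 t0 s0 S0 (pS f g A B b S0) HCa HFcv HFle HFge (And3 HF0 HC0 HFri)
  HDa HGcv HGle HGge (And3 HG0 HD0 HGri) HB0 (fun x Hx => pS_lb Hfn Hgn Hc Hx).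
have Hx1 : f x0 = (fine (f x0))%:E by move: Df (Hfn x0); case: (f x0).
have Hu1 : g (A *m x0) = (fine (g (A *m x0)))%:E by move: Dg (Hgn (A *m x0)); case: (g _).
have HXi := conj_le Hfn Hgn Hx1 Hu1 Hk.
exists y, z => y' z'.
have Hz : ind_nonneg z = 0%E by rewrite /ind_nonneg asboolT.
have Hsum : \sum_(i < r) (if z i 0 != 0 then mu i 0 else 0) <= \sum_(i in S0) mu i 0.
  rewrite [X in _ <= X]big_mkcond /=; apply: ler_sum => i _.
  case: ifP => [zi|_]; last by case: ifP => // _; exact: ltW.
  case: ifP => // iS; rewrite zS ?iS // in zi.
  by rewrite eqxx in zi.
have LHS : (Xi f g A B b y z + Psi_plus mu z <= (val S0)%:E)%E.
  rewrite /Psi_plus Hz adde0 /val EFinD.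
  by apply: leeD => //; rewrite lee_fin.
apply: le_trans LHS _.
case: (pselect (forall i, 0 <= z' i 0)) => Hz'.
  have Hz'' : ind_nonneg z' = 0%E by rewrite /ind_nonneg asboolT.
  rewrite /Psi_plus Hz'' adde0.
  set T := [set i | z' i 0 != 0]%SET.
  have ST : \sum_(i < r) (if z' i 0 != 0 then mu i 0 else 0) = \sum_(i in T) mu i 0.
    by rewrite [RHS]big_mkcond /=; apply: eq_bigr => i _; rewrite inE.
  rewrite ST.
  apply: le_trans (_ : (val T)%:E <= _)%E.
    by rewrite lee_fin; apply: HS0.
  rewrite /val EFinD; apply: leeD => //.
  exact: (weak Hfn Hgn Df Dg HB0 y' Hz').
have Hz'' : ind_nonneg z' = (+oo)%E by rewrite /ind_nonneg asboolF.
rewrite /Psi_plus Hz''; apply: le_plus_oo.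
exact: (Xi_ninf B b Hfn Hgn Df Dg y' z').
Qed.
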